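(* Let $n\ge0$ and $m\ge n+2$. Then $L_n^{n+1}=L_n^m$, i.e. for every set of formulas $\Gamma$ and formula $\alpha$, $\Gamma\vdash_{L_n^{n+1}}\alpha$ iff $\Gamma\vdash_{L_n^m}\alpha$.
   Context: Formulas are built from a countable set of propositional variables using unary $\neg,\circ$ and binary $\land,\lor,\to$; $\circ^0\alpha=\alpha$, $\circ^{m+1}\alpha=\circ(\circ^m\alpha)$, $\alpha\leftrightarrow\beta:=(\alpha\to\beta)\land(\beta\to\alpha)$. mbC is the Hilbert calculus with the axiom schemas of a standard axiomatization of positive classical propositional logic in $\land,\lor,\to$, plus (TND) $\alpha\lor\neg\alpha$ and (bc1) $\circ\alpha\to(\alpha\to(\neg\alpha\to\beta))$, modus ponens being the only rule; mbCciw is mbC plus (ciw) $\circ\alpha\lor(\alpha\land\neg\alpha)$. For $n\ge0$, $k\ge1$, $L_n^k$ is mbCciw plus (cc$^n$) $\circ^{n+2}\alpha$, (dn) $\neg\neg\alpha\leftrightarrow\alpha$, and (ip$^j$) $\neg\circ^j\neg\alpha\leftrightarrow\neg\circ^j\alpha$ for each $1\le j<k$. $\Gamma\vdash_L\alpha$ denotes derivability of $\alpha$ from $\Gamma$ in $L$. *)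

(* Defs.v *)
From Stdlib Require Import Arith.

Inductive form : Type :=
  | Var : nat -> form
  | Neg : form -> form
  | Circ : form -> form
  | And : form -> form -> form
  | Or : form -> form -> form
  | Imp : form -> form -> form.

Fixpoint circ_iter (m : nat) (a : form) : form :=
  match m with
  | 0 => a
  | S m' => Circ (circ_iter m' a)
  end.

Definition Iff (a b : form) : form := And (Imp a b) (Imp b a).

Inductive cpl_pos_axiom : form -> Prop :=
  | Ax1 a b : cpl_pos_axiom (Imp a (Imp b a))
  | Ax2 a b c : cpl_pos_axiom
      (Imp (Imp a b) (Imp (Imp a (Imp b c)) (Imp a c)))
  | Ax3 a b : cpl_pos_axiom (Imp a (Imp b (And a b)))
  | Ax4 a b : cpl_pos_axiom (Imp (And a b) a)
  | Ax5 a b : cpl_pos_axiom (Imp (And a b) b)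
  | Ax6 a b : cpl_pos_axiom (Imp a (Or a b))
  | Ax7 a b : cpl_pos_axiom (Imp b (Or a b))
  | Ax8 a b c : cpl_pos_axiom
      (Imp (Imp a c) (Imp (Imp b c) (Imp (Or a b) c)))
  | Ax9 a b : cpl_pos_axiom (Or a (Imp a b)).

Inductive mbC_axiom : form -> Prop :=
  | mbC_pos a : cpl_pos_axiom a -> mbC_axiom a
  | mbC_TND a : mbC_axiom (Or a (Neg a))
  | mbC_bc1 a b : mbC_axiom (Imp (Circ a) (Imp a (Imp (Neg a) b))).

Inductive mbCciw_axiom : form -> Prop :=
  | ciw_mbC a : mbC_axiom a -> mbCciw_axiom a
  | ciw_ciw a : mbCciw_axiom (Or (Circ a) (And a (Neg a))).

Inductive L_axiom (n k : nat) : form -> Prop :=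
  | L_base a : mbCciw_axiom a -> L_axiom n k a
  | L_cc a : L_axiom n k (circ_iter (n + 2) a)
  | L_dn a : L_axiom n k (Iff (Neg (Neg a)) a)
  | L_ip j a : 1 <= j -> j < k ->
      L_axiom n k (Iff (Neg (circ_iter j (Neg a))) (Neg (circ_iter j a))).

Inductive derivable (Ax : form -> Prop) (Gamma : form -> Prop) : form -> Prop :=
  | d_prem a : Gamma a -> derivable Ax Gamma a
  | d_ax a : Ax a -> derivable Ax Gamma a
  | d_mp a b : derivable Ax Gamma (Imp a b) -> derivable Ax Gamma a ->
      derivable Ax Gamma b.

Definition L_derivable (n k : nat) (Gamma : form -> Prop) (a : form) : Prop :=
  derivable (L_axiom n k) Gamma a.

(* Main.v *)
Require Import Defs.
From Stdlib Require Import Arith Lia.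

Definition ext (G : form -> Prop) (a : form) : form -> Prop := fun x => G x \/ x = a.

Ltac inprem := apply d_prem; unfold ext; auto 10.

Lemma weaken Ax (G G' : form -> Prop) a :
  (forall x, G x -> G' x) -> derivable Ax G a -> derivable Ax G' a.
Proof. intros HS H; induction H; [apply d_prem; auto | apply d_ax; auto | eapply d_mp; eauto]. Qed.

Lemma lift Ax G a b : derivable Ax G b -> derivable Ax (ext G a) b.
Proof. apply weaken; unfold ext; auto. Qed.

Definition PosAx (Ax : form -> Prop) := forall a, cpl_pos_axiom a -> Ax a.

Lemma pax Ax G a : PosAx Ax -> cpl_pos_axiom a -> derivable Ax G a.
Proof. intros HP H; apply d_ax; auto. Qed.

Lemma imp_refl Ax G a : PosAx Ax -> derivable Ax G (Imp a a).
Proof.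
  intros HP.
  eapply d_mp; [eapply d_mp; [apply pax; [exact HP| apply (Ax2 a (Imp a a) a)]|] |];
  apply pax; auto; constructor.
Qed.

Lemma ded Ax G a b : PosAx Ax -> derivable Ax (ext G a) b -> derivable Ax G (Imp a b).
Proof.
  intros HP H; induction H.
  - destruct H as [H|H].
    + eapply d_mp; [apply pax; [exact HP|apply Ax1]| apply d_prem; auto].
    + subst; apply imp_refl; auto.
  - eapply d_mp; [apply pax; [exact HP|apply Ax1]| apply d_ax; auto].
  - eapply d_mp; [eapply d_mp; [apply pax; [exact HP|apply (Ax2 a a0 b)]|]|]; eauto.
Qed.

Lemma and_i Ax G a b : PosAx Ax -> derivable Ax G a -> derivable Ax G b -> derivable Ax G (And a b).
Proof. intros HP H1 H2; eapply d_mp; [eapply d_mp; [apply pax; [exact HP|apply Ax3]|]|]; eauto. Qed.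
Lemma and_l Ax G a b : PosAx Ax -> derivable Ax G (And a b) -> derivable Ax G a.
Proof. intros HP H; eapply d_mp; [apply pax; [exact HP|apply (Ax4 a b)]|]; eauto. Qed.
Lemma and_r Ax G a b : PosAx Ax -> derivable Ax G (And a b) -> derivable Ax G b.
Proof. intros HP H; eapply d_mp; [apply pax; [exact HP|apply (Ax5 a b)]|]; eauto. Qed.
Lemma or_e Ax G a b c : PosAx Ax -> derivable Ax G (Or a b) ->
  derivable Ax (ext G a) c -> derivable Ax (ext G b) c -> derivable Ax G c.
Proof.
  intros HP H H1 H2; apply ded in H1; apply ded in H2; auto.
  eapply d_mp; [eapply d_mp; [eapply d_mp; [apply pax; [exact HP|apply (Ax8 a b c)]|]|]|]; eauto.
Qed.
Lemma iff_i Ax G a b : PosAx Ax -> derivable Ax (ext G a) b -> derivable Ax (ext G b) a ->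
  derivable Ax G (Iff a b).
Proof. intros HP H1 H2; apply and_i; auto; apply ded; auto. Qed.
Lemma iff_l Ax G a b : PosAx Ax -> derivable Ax G (Iff a b) -> derivable Ax G a -> derivable Ax G b.
Proof. intros HP H1 H2; eapply d_mp; [eapply and_l; eauto|]; eauto. Qed.
Lemma iff_r Ax G a b : PosAx Ax -> derivable Ax G (Iff a b) -> derivable Ax G b -> derivable Ax G a.
Proof. intros HP H1 H2; eapply d_mp; [eapply and_r; eauto|]; eauto. Qed.
Lemma iff_sym Ax G a b : PosAx Ax -> derivable Ax G (Iff a b) -> derivable Ax G (Iff b a).
Proof. intros HP H; apply and_i; auto; [eapply and_r|eapply and_l]; eauto. Qed.
Lemma iff_trans Ax G a b c : PosAx Ax -> derivable Ax G (Iff a b) -> derivable Ax G (Iff b c) ->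
  derivable Ax G (Iff a c).
Proof.
  intros HP H1 H2; apply iff_i; auto.
  - eapply iff_l; auto; [apply lift; exact H2|]; eapply iff_l; auto; [apply lift; exact H1|]; inprem.
  - eapply iff_r; auto; [apply lift; exact H1|]; eapply iff_r; auto; [apply lift; exact H2|]; inprem.
Qed.
Lemma and_congr Ax G a a' b b' : PosAx Ax -> derivable Ax G (Iff a a') -> derivable Ax G (Iff b b') ->
  derivable Ax G (Iff (And a b) (And a' b')).
Proof.
  intros HP H1 H2; apply iff_i; auto; apply and_i; auto.
  - eapply iff_l; auto; [apply lift; exact H1|]; eapply and_l; auto; inprem.
  - eapply iff_l; auto; [apply lift; exact H2|]; eapply and_r; auto; inprem.
  - eapply iff_r; auto; [apply lift; exact H1|]; eapply and_l; auto; inprem.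
  - eapply iff_r; auto; [apply lift; exact H2|]; eapply and_r; auto; inprem.
Qed.

Lemma LP n k : PosAx (L_axiom n k).
Proof. intros a H; apply L_base, ciw_mbC, mbC_pos, H. Qed.
Hint Resolve LP : core.

Notation D n k G a := (derivable (L_axiom n k) G a).

Lemma expl n k G b c : D n k G (Circ b) -> D n k G b -> D n k G (Neg b) -> D n k G c.
Proof.
  intros H1 H2 H3.
  eapply d_mp; [eapply d_mp; [eapply d_mp; [apply d_ax, L_base, ciw_mbC, (mbC_bc1 b c)|]|]|]; eauto.
Qed.
Lemma ciw n k G b : D n k G (Or (Circ b) (And b (Neg b))).
Proof. apply d_ax, L_base, ciw_ciw. Qed.
Lemma tnd n k G b : D n k G (Or b (Neg b)).
Proof. apply d_ax, L_base, ciw_mbC, mbC_TND. Qed.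
Lemma dn n k G a : D n k G (Iff (Neg (Neg a)) a).
Proof. apply d_ax, L_dn. Qed.

Lemma lemA n k G b : (forall G, D n k G (Circ (Circ b))) ->
  D n k G (Iff (Neg (Circ b)) (And b (Neg b))).
Proof.
  intros Hc; apply iff_i; auto.
  - eapply or_e; auto; [apply ciw|..].
    + eapply expl; [apply Hc|inprem|inprem].
    + inprem.
  - eapply or_e; auto; [apply (tnd _ _ _ (Circ b))|..].
    + eapply (expl _ _ _ b); [inprem|eapply and_l; auto; inprem|eapply and_r; auto; inprem].
    + inprem.
Qed.

Lemma circ_imp n k G a a' : D n k G (Iff a a') -> D n k G (Iff (Neg a) (Neg a')) ->
  D n k (ext G (Circ a)) (Circ a').
Proof.
  intros H1 H2; eapply or_e; auto; [apply (ciw _ _ _ a')|..].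
  - inprem.
  - eapply (expl _ _ _ a); [inprem| |].
    + eapply iff_r; auto; [apply lift, lift; exact H1|]; eapply and_l; auto; inprem.
    + eapply iff_r; auto; [apply lift, lift; exact H2|]; eapply and_r; auto; inprem.
Qed.

Lemma congr_circ n k G a a' : D n k G (Iff a a') -> D n k G (Iff (Neg a) (Neg a')) ->
  D n k G (Iff (Circ a) (Circ a')).
Proof.
  intros H1 H2; apply iff_i; auto; apply circ_imp; auto; apply iff_sym; auto.
Qed.

Lemma circ_neg n k G a : D n k G (Iff (Circ a) (Circ (Neg a))).
Proof.
  apply iff_i; auto.
  - eapply or_e; auto; [apply (ciw _ _ _ (Neg a))|..]; [inprem|].
    eapply (expl _ _ _ a); [inprem| |].
    + eapply iff_l; auto; [apply dn|]; eapply and_r; auto; inprem.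
    + eapply and_l; auto; inprem.
  - eapply or_e; auto; [apply (ciw _ _ _ a)|..]; [inprem|].
    eapply (expl _ _ _ (Neg a)); [inprem| |].
    + eapply and_r; auto; inprem.
    + eapply iff_r; auto; [apply dn|]; eapply and_l; auto; inprem.
Qed.

Lemma ip n k G j a : 1 <= j -> j < k ->
  D n k G (Iff (Neg (circ_iter j (Neg a))) (Neg (circ_iter j a))).
Proof. intros; apply d_ax, L_ip; auto. Qed.

Lemma lemD n k G a : forall j, 1 <= j -> j <= k ->
  D n k G (Iff (circ_iter j a) (circ_iter j (Neg a))).
Proof.
  induction j; intros H1 H2; [lia|].
  destruct j; [apply circ_neg|].
  change (D n k G (Iff (Circ (circ_iter (S j) a)) (Circ (circ_iter (S j) (Neg a))))); apply congr_circ.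
  - apply IHj; lia.
  - apply iff_sym; auto; apply ip; lia.
Qed.

Lemma cc' n k G x : D n k G (Circ (Circ (circ_iter n x))).
Proof.
  assert (E : circ_iter (n+2) x = Circ (Circ (circ_iter n x))).
  { rewrite Nat.add_comm; reflexivity. }
  rewrite <- E; apply d_ax, L_cc.
Qed.

Lemma lemE n k G a : n < k ->
  D n k G (Iff (Neg (circ_iter (S n) (Neg a))) (Neg (circ_iter (S n) a))).
Proof.
  intros Hk; simpl.
  eapply iff_trans; auto; [apply lemA; intros; apply cc'|].
  eapply iff_trans; auto; [|apply iff_sym; auto; apply lemA; intros; apply cc'].
  destruct n as [|n'].
  - simpl. apply iff_i; auto; apply and_i; auto.
    + eapply iff_l; auto; [apply dn|]; eapply and_r; auto; inprem.
    + eapply and_l; auto; inprem.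
    + eapply and_r; auto; inprem.
    + eapply iff_r; auto; [apply dn|]; eapply and_l; auto; inprem.
  - apply and_congr; auto.
    + apply iff_sym; auto; apply lemD; lia.
    + apply ip; lia.
Qed.

Lemma circ_iter_add p q x : circ_iter (p + q) x = circ_iter p (circ_iter q x).
Proof. induction p; simpl; congruence. Qed.

Lemma high n k G j x : n + 2 <= j -> D n k G (circ_iter j x).
Proof.
  intros H. replace j with ((n+2) + (j - (n+2))) by lia.
  rewrite circ_iter_add; apply d_ax, L_cc.
Qed.

Lemma lemF n k G j a : n + 2 <= j ->
  D n k G (Iff (Neg (circ_iter j (Neg a))) (Neg (circ_iter j a))).
Proof.
  intros H; apply iff_i; auto.
  - eapply (expl _ _ _ (circ_iter j (Neg a))); [apply (high _ _ _ (S j)); lia|apply high; lia|inprem].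
  - eapply (expl _ _ _ (circ_iter j a)); [apply (high _ _ _ (S j)); lia|apply high; lia|inprem].
Qed.

Lemma transfer (Ax1 Ax2 : form -> Prop) G b :
  (forall a, Ax2 a -> derivable Ax1 G a) -> derivable Ax2 G b -> derivable Ax1 G b.
Proof. intros HA H; induction H; [apply d_prem; auto|auto|eapply d_mp; eauto]. Qed.

Theorem theorem28 (n m : nat) (Hm : n + 2 <= m) :
  forall (Gamma : form -> Prop) (alpha : form),
    L_derivable n (n + 1) Gamma alpha <-> L_derivable n m Gamma alpha.
Proof.
  intros G al; unfold L_derivable; split; apply transfer; intros a Ha.
  - apply d_ax. destruct Ha; [constructor 1; auto|constructor 2|constructor 3|constructor 4; lia].
  - destruct Ha.
    + apply d_ax; constructor 1; auto.
    + apply d_ax; constructor 2.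
    + apply d_ax; constructor 3.
    + destruct (Nat.lt_ge_cases j (n+1)).
      * apply d_ax; constructor 4; auto.
      * destruct (Nat.eq_dec j (n+1)).
        -- subst j; rewrite Nat.add_1_r; apply lemE; lia.
        -- apply lemF; lia.
Qed.
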